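(* Let $s,t\in\mathbb{R}$ with $s\ne0$, $t\neq0$, $s^2+4t>0$, and let $a,\xi\in\mathbb{C}$. Consider the equation $(\mathbf{D}_{s,t}y)(x)=a\,y(\varphi_{s,t}x)$. (All identities below are asserted at points where the involved series converge.) (1) $f(x)=\xi\,\mathrm{Exp}_{s,t}(ax)$ is a solution with $f(0)=\xi$. (2) For $\eta$ with $\mathrm{Exp}_{s,t}(a\eta)$ and $\mathrm{Exp}'_{s,t}(-a\eta)$ convergent, $f(x)=\xi\,\mathrm{Exp}_{s,t}(ax)\,\mathrm{Exp}'_{s,t}(-a\eta)$ is a solution with $f(\eta)=\xi$. (3) If $\eta>0$ and $f(x)=\mathrm{Exp}_{s,t}(ax)\mathrm{Exp}'_{s,t}(-a\eta)$ (a solution with $f(\eta)=1$), then for every function $p$ with $p(qy)=p(y)$ for all $y\ne0$, where $q=\varphi'_{s,t}/\varphi_{s,t}$, the function $g(x)=p(x)f(x)$ is also a solution, and $g(\eta)=p(\eta)$.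
   Context: $\varphi_{s,t}=\frac{s+\sqrt{s^2+4t}}{2}$, $\varphi'_{s,t}=\frac{s-\sqrt{s^2+4t}}{2}$. Generalized Fibonacci polynomials: $\{0\}_{s,t}=0$, $\{1\}_{s,t}=1$, $\{n+2\}_{s,t}=s\{n+1\}_{s,t}+t\{n\}_{s,t}$; Fibotorial $\{n\}_{s,t}!=\prod_{k=1}^n\{k\}_{s,t}$, $\{0\}_{s,t}!=1$. $\mathrm{Exp}_{s,t}(z)=\sum_{n\ge0}\varphi_{s,t}^{\binom n2}z^n/\{n\}_{s,t}!$, $\mathrm{Exp}'_{s,t}(z)=\sum_{n\ge0}\varphi_{s,t}'^{\,\binom n2}z^n/\{n\}_{s,t}!$. The $(s,t)$-derivative: $(\mathbf{D}_{s,t}f)(x)=\frac{f(\varphi_{s,t}x)-f(\varphi'_{s,t}x)}{(\varphi_{s,t}-\varphi'_{s,t})x}$ for $x\ne0$, $(\mathbf{D}_{s,t}f)(0)=f'(0)$. In the paper the $q$-periodic functions are written $G(\log_q(x))$ with $G$ periodic of period one. *)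

(* Defs.v *)
From Stdlib Require Import Reals.
From Coquelicot Require Import Coquelicot.

Open Scope R_scope.

Definition phi (s t : R) : R := (s + sqrt (s ^ 2 + 4 * t)) / 2.
Definition phi' (s t : R) : R := (s - sqrt (s ^ 2 + 4 * t)) / 2.

Fixpoint fibst (s t : R) (n : nat) : R :=
  match n with
  | O => 0
  | S O => 1
  | S ((S m) as k) => s * fibst s t k + t * fibst s t m
  end.

Fixpoint fibtorial (s t : R) (n : nat) : R :=
  match n with
  | O => 1
  | S m => fibtorial s t m * fibst s t (S m)
  end.

Definition binom2 (n : nat) : nat := (n * (n - 1) / 2)%nat.

Definition ExpTerm (s t : R) (z : C) (n : nat) : C :=
  Cmult (RtoC (phi s t ^ binom2 n / fibtorial s t n)) (Cpow z n).
Definition ExpTerm' (s t : R) (z : C) (n : nat) : C :=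
  Cmult (RtoC (phi' s t ^ binom2 n / fibtorial s t n)) (Cpow z n).

Definition Cseries_conv (u : nat -> C) : Prop :=
  @ex_series R_AbsRing C_R_NormedModule u.
Definition Cseries (u : nat -> C) : C :=
  (Series (fun n => fst (u n)), Series (fun n => snd (u n))).

Definition Exp_conv (s t : R) (z : C) : Prop := Cseries_conv (ExpTerm s t z).
Definition Exp'_conv (s t : R) (z : C) : Prop := Cseries_conv (ExpTerm' s t z).
Definition Exp (s t : R) (z : C) : C := Cseries (ExpTerm s t z).
Definition Exp' (s t : R) (z : C) : C := Cseries (ExpTerm' s t z).

Definition Dst_is (s t : R) (f : R -> C) (x : R) (v : C) : Prop :=
  if Req_EM_T x 0 then @is_derive R_AbsRing C_R_NormedModule f 0 v
  else v = Cdiv (Cminus (f (phi s t * x)) (f (phi' s t * x)))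
                (RtoC ((phi s t - phi' s t) * x)).

Definition solves_at (s t : R) (a : C) (y : R -> C) (x : R) : Prop :=
  Dst_is s t y x (Cmult a (y (phi s t * x))).

(* the series involved in evaluating both sides of the equation at x
   for y = Exp_{s,t}(a .) times a constant *)
Definition involved_conv (s t : R) (a : C) (x : R) : Prop :=
  Exp_conv s t (Cmult a (RtoC x)) /\
  Exp_conv s t (Cmult a (RtoC (phi s t * x))) /\
  Exp_conv s t (Cmult a (RtoC (phi' s t * x))).

(* Main.v *)
Require Import Defs.
From Stdlib Require Import Reals Lra Lia Psatz Arith.
From Coquelicot Require Import Coquelicot.
Open Scope R_scope.

Section Alg.
Variables (s t : R).
Hypothesis hs : s <> 0.
Hypothesis ht : t <> 0.
Hypothesis hd : s ^ 2 + 4 * t > 0.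

Let sq := sqrt (s ^ 2 + 4 * t).
Lemma sq_sq : sq * sq = s ^ 2 + 4 * t.
Proof. unfold sq. apply sqrt_sqrt. lra. Qed.
Lemma sq_pos : 0 < sq.
Proof. unfold sq. apply sqrt_lt_R0. lra. Qed.

Lemma phi_sum : phi s t + phi' s t = s.
Proof. unfold phi, phi'. lra. Qed.
Lemma phi_diff : phi s t - phi' s t = sq.
Proof. unfold phi, phi', sq. lra. Qed.
Lemma phi_prod : phi s t * phi' s t = - t.
Proof. unfold phi, phi'. pose proof sq_sq. unfold sq in H.
  replace ((s + sqrt (s ^ 2 + 4 * t)) / 2 * ((s - sqrt (s ^ 2 + 4 * t)) / 2))
   with ((s*s - sqrt (s ^ 2 + 4 * t) * sqrt (s ^ 2 + 4 * t))/4) by field.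
  rewrite H. field. Qed.
Lemma phi_nz : phi s t <> 0.
Proof. intro h. pose proof phi_prod. rewrite h in H. lra. Qed.
Lemma phi'_nz : phi' s t <> 0.
Proof. intro h. pose proof phi_prod. rewrite h in H. lra. Qed.

Lemma binet_aux : forall n,
  sq * fibst s t n = phi s t ^ n - phi' s t ^ n /\
  sq * fibst s t (S n) = phi s t ^ (S n) - phi' s t ^ (S n).
Proof.
  pose proof phi_sum; pose proof phi_prod; pose proof phi_diff.
  induction n as [|n [IH1 IH2]].
  - simpl. split; lra.
  - split; [exact IH2|].
    change (fibst s t (S (S n))) with (s * fibst s t (S n) + t * fibst s t n).
    replace (sq * (s * fibst s t (S n) + t * fibst s t n)) with
      (s * (sq * fibst s t (S n)) + t * (sq * fibst s t n)) by ring.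
    rewrite IH1, IH2.
    set (u := phi s t) in *. set (v := phi' s t) in *.
    replace s with (u + v) by lra.
    replace t with (- (u * v)) by lra.
    simpl. ring.
Qed.

Lemma binet : forall n, sq * fibst s t n = phi s t ^ n - phi' s t ^ n.
Proof. intro n. apply (binet_aux n). Qed.

Lemma abs_phi_neq : Rabs (phi s t) <> Rabs (phi' s t).
Proof.
  intro h. assert (Rabs (phi s t) ^ 2 = Rabs (phi' s t) ^ 2) by (rewrite h; auto).
  rewrite !RPow_abs in H. rewrite !Rabs_right in H by (apply Rle_ge; nra).
  pose proof phi_sum; pose proof phi_diff; pose proof sq_pos.
  assert ((phi s t - phi' s t) * (phi s t + phi' s t) = 0) by nra.
  rewrite H0, H1 in H3. apply Rmult_integral in H3. destruct H3; lra.
Qed.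

Lemma pow_lt_strict : forall x y n, 0 <= x < y -> (n >= 1)%nat -> x ^ n < y ^ n.
Proof.
  intros x y n [h1 h2] hn. induction n as [|n IH]; [lia|].
  destruct n. simpl; lra.
  assert (x ^ S n < y ^ S n) by (apply IH; lia).
  change (x * x ^ S n < y * y ^ S n).
  assert (0 <= x ^ S n) by (apply pow_le; lra).
  nra.
Qed.

Lemma fibst_nz : forall n, (n >= 1)%nat -> fibst s t n <> 0.
Proof.
  intros n hn h. pose proof (binet n). rewrite h, Rmult_0_r in H.
  assert (Rabs (phi s t ^ n) = Rabs (phi' s t ^ n)) by (f_equal; lra).
  rewrite <- !RPow_abs in H0. pose proof abs_phi_neq.
  pose proof (Rabs_pos (phi s t)); pose proof (Rabs_pos (phi' s t)).
  destruct (Rlt_dec (Rabs (phi s t)) (Rabs (phi' s t))).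
  - pose proof (pow_lt_strict (Rabs (phi s t)) (Rabs (phi' s t)) n (conj H2 r) hn). lra.
  - assert (Rabs (phi' s t) < Rabs (phi s t)) by lra.
    pose proof (pow_lt_strict _ _ n (conj H3 H4) hn). lra.
Qed.

Lemma fibtorial_nz : forall n, fibtorial s t n <> 0.
Proof.
  induction n. simpl; lra. change (fibtorial s t n * fibst s t (S n) <> 0).
  apply Rmult_integral_contrapositive; split; auto.
  apply fibst_nz; lia.
Qed.

End Alg.

Lemma binom2_S : forall n, binom2 (S n) = (binom2 n + n)%nat.
Proof.
  intro n. unfold binom2. replace (S n * (S n - 1))%nat with (n * (n - 1) + n * 2)%nat.
  - rewrite Nat.div_add by lia. reflexivity.
  - destruct n; simpl; [reflexivity|]. rewrite Nat.sub_0_r. nia.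
Qed.

Definition gam (s t r : R) (n : nat) : R := r ^ binom2 n / fibtorial s t n.

Lemma gam_rec : forall s t r n, s <> 0 -> t <> 0 -> s ^ 2 + 4 * t > 0 ->
  gam s t r (S n) * fibst s t (S n) = gam s t r n * r ^ n.
Proof.
  intros s t r n hs ht hd. unfold gam. rewrite binom2_S, pow_add.
  change (fibtorial s t (S n)) with (fibtorial s t n * fibst s t (S n)).
  pose proof (fibtorial_nz s t hs hd n). pose proof (fibst_nz s t hs hd (S n) ltac:(lia)).
  field. auto.
Qed.

Lemma gam_0 : forall s t r, gam s t r 0 = 1.
Proof. intros. unfold gam, binom2. simpl. field. Qed.

Section Conv.
Variables (s t : R).
Hypothesis hs : s <> 0.
Hypothesis ht : t <> 0.
Hypothesis hd : s ^ 2 + 4 * t > 0.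

Definition ee k := gam s t (phi s t) k.
Definition ee' j := gam s t (phi' s t) j * (-1) ^ j.
Definition dd n := sum_f_R0 (fun k => ee k * ee' (n - k)) n.

Lemma fib_add : forall k j,
  fibst s t (k + j) = phi s t ^ j * fibst s t k + phi' s t ^ k * fibst s t j.
Proof.
  intros k j. pose proof (sq_pos s t hd).
  apply (Rmult_eq_reg_l (sqrt (s ^ 2 + 4 * t))); [|lra].
  rewrite Rmult_plus_distr_l.
  replace (sqrt (s ^ 2 + 4 * t) * (phi s t ^ j * fibst s t k)) with
     (phi s t ^ j * (sqrt (s ^ 2 + 4 * t) * fibst s t k)) by ring.
  replace (sqrt (s ^ 2 + 4 * t) * (phi' s t ^ k * fibst s t j)) with
     (phi' s t ^ k * (sqrt (s ^ 2 + 4 * t) * fibst s t j)) by ring.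
  rewrite !binet by auto. rewrite !pow_add. ring.
Qed.

Lemma ee_rec : forall k, fibst s t (S k) * ee (S k) = phi s t ^ k * ee k.
Proof. intro k. unfold ee. rewrite Rmult_comm, gam_rec by auto. ring. Qed.

Lemma ee'_rec : forall j, fibst s t (S j) * ee' (S j) = - (phi' s t ^ j * ee' j).
Proof. intro j. unfold ee'.
  replace (fibst s t (S j) * (gam s t (phi' s t) (S j) * (-1) ^ S j)) with
    ((gam s t (phi' s t) (S j) * fibst s t (S j)) * (-1) ^ S j) by ring.
  rewrite gam_rec by auto. simpl. ring. Qed.

Lemma ee_0 : ee 0 = 1.
Proof. apply gam_0. Qed.
Lemma ee'_0 : ee' 0 = 1.
Proof. unfold ee'. rewrite gam_0. simpl; ring. Qed.

Lemma dd_rec : forall M, fibst s t (S M) * dd (S M) = (phi s t ^ M - phi' s t ^ M) * dd M.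
Proof.
  intro M.
  set (X := fun k => match k with 0%nat => 0 | S k' => phi s t ^ M * (ee k' * ee' (M - k')) end).
  set (Y := fun k => if le_lt_dec k M then phi' s t ^ M * (ee k * ee' (M - k)) else 0).
  unfold dd. rewrite scal_sum.
  rewrite (sum_eq _ (fun k => X k - Y k)).
  2:{ intros k hk. unfold X, Y. destruct k as [|k'].
      - destruct (le_lt_dec 0 M); [|lia]. rewrite !Nat.sub_0_r, ee_0.
        replace (0 - phi' s t ^ M * (1 * ee' M)) with (- (phi' s t ^ M * ee' M)) by ring.
        rewrite <- (ee'_rec M). ring.
      - destruct (le_lt_dec (S k') M) as [hl|hl].
        + remember (M - S k')%nat as j' eqn:Ej.
          assert (M = (k' + S j')%nat) by lia. subst M.
          replace (S (k' + S j') - S k')%nat with (S j') by lia.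
          replace (k' + S j' - k')%nat with (S j') by lia.
          replace (S (k' + S j')) with (S k' + S j')%nat by lia.
          rewrite fib_add.
          transitivity (phi s t ^ S j' * (fibst s t (S k') * ee (S k')) * ee' (S j') +
              phi' s t ^ S k' * ee (S k') * (fibst s t (S j') * ee' (S j'))); [ring|].
          rewrite ee_rec, ee'_rec. rewrite !pow_add. simpl. ring.
        + assert (k' = M) by lia. subst k'.
          rewrite Nat.sub_diag. rewrite Nat.sub_diag. rewrite ee'_0.
          transitivity (fibst s t (S M) * ee (S M)); [ring|].
          rewrite ee_rec. ring. }
  rewrite minus_sum.
  assert (HX : sum_f_R0 X (S M) = phi s t ^ M * sum_f_R0 (fun k => ee k * ee' (M - k)) M).
  { rewrite decomp_sum by lia. simpl pred. rewrite scal_sum. simpl X at 1. rewrite Rplus_0_l.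
    apply sum_eq. intros; simpl; ring. }
  assert (HY : sum_f_R0 Y (S M) = phi' s t ^ M * sum_f_R0 (fun k => ee k * ee' (M - k)) M).
  { rewrite tech5. unfold Y at 2. destruct (le_lt_dec (S M) M); [lia|].
    rewrite Rplus_0_r, scal_sum. apply sum_eq. intros i hi. unfold Y.
    destruct (le_lt_dec i M); [ring|lia]. }
  rewrite HX, HY. ring.
Qed.

Lemma dd_0 : dd 0 = 1.
Proof. unfold dd. simpl. rewrite ee_0, ee'_0. ring. Qed.

Lemma dd_S : forall n, dd (S n) = 0.
Proof.
  induction n.
  - pose proof (dd_rec 0). simpl in H. rewrite Rminus_diag, Rmult_0_l in H.
    replace (fibst s t 1) with 1 in H by reflexivity. lra.
  - pose proof (dd_rec (S n)). rewrite IHn, Rmult_0_r in H.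
    apply Rmult_integral in H. destruct H; auto.
    exfalso. apply (fibst_nz s t hs hd (S (S n))); auto; lia.
Qed.

End Conv.

Fixpoint gs (Q : R) (n : nat) : R :=
  match n with 0%nat => 0 | S m => gs Q m + Q ^ S m end.

Lemma gs_bound : forall Q n, 0 <= Q < 1 -> gs Q n <= Q / (1 - Q).
Proof.
  intros Q n hQ.
  assert (forall n, (1 - Q) * gs Q n = Q - Q ^ S n).
  { induction n0; simpl. ring. rewrite Rmult_plus_distr_l, IHn0. simpl. ring. }
  pose proof (H n). assert (0 <= Q ^ S n) by (apply pow_le; lra).
  apply (Rmult_le_reg_l (1 - Q)); [lra|]. rewrite H0. field_simplify; lra.
Qed.

Section Ratio.
Variables (g : nat -> R) (q : R).
Hypothesis g0 : g 0%nat = 1.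
Hypothesis gnz : forall n, g n <> 0.
Hypothesis grec : forall n, g (S n) * (1 - q ^ S n) = g n * (1 - q).
Hypothesis q1 : Rabs q <> 1.

Lemma one_minus_qpow_nz : forall n, (n >= 1)%nat -> 1 - q ^ n <> 0.
Proof.
  intros n hn h. assert (Rabs (q ^ n) = 1) by (replace (q ^ n) with 1 by lra; apply Rabs_R1).
  rewrite <- RPow_abs in H. pose proof (Rabs_pos q).
  destruct (Rlt_dec (Rabs q) 1).
  - assert (Rabs q ^ n < 1 ^ n) by (apply pow_lt_strict; auto; lra).
    rewrite pow1 in H1. lra.
  - assert (1 ^ n < Rabs q ^ n) by (apply pow_lt_strict; auto; lra).
    rewrite pow1 in H1. lra.
Qed.

Lemma q_ne1 : 1 - q <> 0.
Proof. intro h. apply q1. replace q with 1 by lra. apply Rabs_R1. Qed.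

Lemma ratio_eq : forall n, g (S n) / g n = (1 - q) / (1 - q ^ S n).
Proof.
  intro n. pose proof (one_minus_qpow_nz (S n) ltac:(lia)). pose proof (gnz n).
  pose proof (grec n).
  apply (Rmult_eq_reg_r (g n * (1 - q ^ S n))).
  2: apply Rmult_integral_contrapositive; split; auto.
  replace (g (S n) / g n * (g n * (1 - q ^ S n))) with (g (S n) * (1 - q ^ S n)) by (field; auto).
  rewrite H1. field. auto.
Qed.

Lemma abs_ratio : forall rho n, 0 < rho ->
  Rabs (g (S n) * rho ^ S n / (g n * rho ^ n)) = rho * Rabs (1 - q) / Rabs (1 - q ^ S n).
Proof.
  intros rho n hr.
  replace (g (S n) * rho ^ S n / (g n * rho ^ n)) with (rho * (g (S n) / g n)).
  2:{ simpl. field. split; auto. apply pow_nonzero. lra. }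
  rewrite ratio_eq. rewrite Rabs_mult, Rabs_div by (apply one_minus_qpow_nz; lia).
  rewrite (Rabs_right rho) by lra. unfold Rdiv. ring.
Qed.

Lemma lim_small : Rabs q < 1 -> forall rho,
  is_lim_seq (fun n => rho * Rabs (1 - q) / Rabs (1 - q ^ S n)) (rho * Rabs (1 - q)).
Proof.
  intros hq rho.
  assert (H1 : is_lim_seq (fun n => q ^ S n) 0).
  { apply (is_lim_seq_incr_1 (fun n => q ^ n)). apply is_lim_seq_geom; auto. }
  assert (H2 : is_lim_seq (fun n => 1 - q ^ S n) (1 - 0)).
  { apply is_lim_seq_minus'; auto. apply is_lim_seq_const. }
  apply is_lim_seq_abs in H2. simpl in H2.
  replace (Rabs (1 - 0)) with 1 in H2 by (rewrite Rminus_0_r, Rabs_R1; auto).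
  apply is_lim_seq_inv in H2; [|intro h; injection h; lra].
  apply (is_lim_seq_scal_l _ (rho * Rabs (1 - q))) in H2.
  simpl in H2. rewrite Rinv_1, Rmult_1_r in H2. exact H2.
Qed.

Lemma lim_big : 1 < Rabs q -> forall rho, 0 <= rho ->
  is_lim_seq (fun n => rho * Rabs (1 - q) / Rabs (1 - q ^ S n)) 0.
Proof.
  intros hq rho hr.
  assert (H1 : is_lim_seq (fun n => Rabs q ^ S n + -1) p_infty).
  { eapply is_lim_seq_plus.
    - apply (is_lim_seq_incr_1 (fun n => Rabs q ^ n)). apply is_lim_seq_geom_p; auto.
    - apply is_lim_seq_const.
    - reflexivity. }
  apply is_lim_seq_inv in H1; [|discriminate].
  apply (is_lim_seq_scal_l _ (rho * Rabs (1 - q))) in H1. simpl in H1.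
  rewrite Rmult_0_r in H1.
  apply (is_lim_seq_le_le_loc (fun _ => 0) _ (fun n => rho * Rabs (1 - q) * / (Rabs q * Rabs q ^ n + -1)) 0); [|apply is_lim_seq_const|exact H1].
  exists 0%nat. intros n _.
  assert (hp : 1 < Rabs q ^ S n).
  { rewrite <- (pow1 (S n)). apply pow_lt_strict; [split; lra|lia]. }
  assert (htri : Rabs q ^ S n - 1 <= Rabs (1 - q ^ S n)).
  { rewrite RPow_abs. pose proof (Rabs_triang_inv (q ^ S n) 1). rewrite Rabs_R1 in H.
    rewrite Rabs_minus_sym. lra. }
  assert (0 <= rho * Rabs (1 - q)) by (apply Rmult_le_pos; auto; apply Rabs_pos).
  split.
  - simpl in htri, hp. unfold Rdiv. assert (0 < Rabs (1 - q ^ S n)) by (simpl; lra). apply Rmult_le_pos; [lra|]. apply Rlt_le, Rinv_0_lt_compat; lra.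
  - unfold Rdiv. apply Rmult_le_compat_l; auto.
    simpl in hp, htri. apply Rinv_le_contravar; simpl; lra.
Qed.

Lemma ex_series_abs : forall rho, 0 <= rho -> (1 < Rabs q \/ rho * Rabs (1 - q) < 1) ->
  ex_series (fun n => Rabs (g n) * rho ^ n).
Proof.
  intros rho hr hc.
  assert (hq1 : 0 < Rabs (1 - q)) by (apply Rabs_pos_lt; apply q_ne1).
  assert (exists r', rho <= r' /\ 0 < r' /\ (1 < Rabs q \/ r' * Rabs (1 - q) < 1)).
  { destruct hc as [hc|hc].
    - exists (rho + 1). split; [lra|]. split; [lra|auto].
    - exists ((rho + / Rabs (1 - q)) / 2).
      assert (rho < / Rabs (1 - q)).
      { apply (Rmult_lt_reg_r (Rabs (1 - q))); auto. rewrite Rinv_l; lra. }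
      assert (0 < / Rabs (1 - q)) by (apply Rinv_0_lt_compat; auto).
      split; [lra|]. split; [lra|]. right.
      replace ((rho + / Rabs (1 - q)) / 2 * Rabs (1 - q)) with
        ((rho * Rabs (1 - q) + 1) / 2) by (field; lra). lra. }
  destruct H as [r' [h1 [h2 h3]]].
  assert (E : ex_series (fun n => Rabs (g n * r' ^ n))).
  { assert (hnz : forall n, g n * r' ^ n <> 0).
    { intro n. apply Rmult_integral_contrapositive; split; auto. apply pow_nonzero; lra. }
    destruct (Rlt_dec 1 (Rabs q)) as [hq|hq].
    - apply (ex_series_DAlembert _ 0); [lra|auto|].
      eapply is_lim_seq_ext; [|apply (lim_big hq r'); lra].
      intro n. cbv beta. rewrite abs_ratio by auto. reflexivity.
    - assert (hq' : Rabs q < 1) by lra.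
      destruct h3 as [h3|h3]; [lra|].
      apply (ex_series_DAlembert _ (r' * Rabs (1 - q))); [lra|auto|].
      eapply is_lim_seq_ext; [|apply (lim_small hq' r')].
      intro n. cbv beta. rewrite abs_ratio by auto. reflexivity. }
  apply (@ex_series_le R_AbsRing R_CompleteNormedModule _ (fun n => Rabs (g n * r' ^ n))); auto.
  intro n. change norm with Rabs. simpl.
  rewrite Rabs_mult, Rabs_mult, Rabs_Rabsolu.
  apply Rmult_le_compat_l; [apply Rabs_pos|].
  rewrite (Rabs_right (rho ^ n)) by (apply Rle_ge, pow_le; auto).
  rewrite (Rabs_right (r' ^ n)) by (apply Rle_ge, pow_le; lra).
  apply pow_incr; lra.
Qed.

Lemma lower_bound : Rabs q < 1 -> forall rho, 1 <= rho * Rabs (1 - q) ->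
  forall n, exp (- (Rabs q / (1 - Rabs q))) <= Rabs (g n) * rho ^ n.
Proof.
  intros hq rho hr.
  assert (hQ : 0 <= Rabs q < 1) by (split; auto; apply Rabs_pos).
  assert (hrho : 0 < rho).
  { destruct (Rle_lt_dec rho 0); auto. pose proof (Rabs_pos (1 - q)). nra. }
  assert (forall n, exp (- gs (Rabs q) n) <= Rabs (g n) * rho ^ n).
  { induction n.
    - simpl. rewrite g0, Rabs_R1, Ropp_0, exp_0. lra.
    - assert (E : Rabs (g (S n)) * rho ^ S n =
                (Rabs (g n) * rho ^ n) * (rho * Rabs (1 - q) / Rabs (1 - q ^ S n))).
      { assert (g (S n) = g n * ((1 - q) / (1 - q ^ S n))).
        { rewrite <- ratio_eq. field. auto. }
        pose proof (one_minus_qpow_nz (S n) ltac:(lia)).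
        rewrite H, Rabs_mult, Rabs_div by auto.
        assert (Rabs (1 - q ^ S n) <> 0) by (apply Rabs_no_R0; auto).
        change (rho ^ S n) with (rho * rho ^ n). field. auto. }
      rewrite E. simpl gs. rewrite Ropp_plus_distr, exp_plus.
      set (x := Rabs q ^ S n).
      assert (hx : 0 <= x) by (apply pow_le; lra).
      assert (h1 : Rabs (1 - q ^ S n) <= 1 + x).
      { unfold x. rewrite RPow_abs. unfold Rminus. eapply Rle_trans; [apply Rabs_triang|].
        rewrite Rabs_R1, Rabs_Ropp. lra. }
      assert (h2 : 0 < Rabs (1 - q ^ S n)) by (apply Rabs_pos_lt, one_minus_qpow_nz; lia).
      assert (h3 : exp (- x) <= rho * Rabs (1 - q) / Rabs (1 - q ^ S n)).
      { rewrite exp_Ropp. pose proof (exp_ineq1_le x).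
        apply (Rle_trans _ (/ Rabs (1 - q ^ S n))).
        - apply Rinv_le_contravar; lra.
        - unfold Rdiv. rewrite <- (Rmult_1_l (/ Rabs (1 - q ^ S n))) at 1.
          apply Rmult_le_compat_r; [left; apply Rinv_0_lt_compat; lra | lra]. }
      apply Rmult_le_compat; auto; left; apply exp_pos. }
  intro n. eapply Rle_trans; [|apply H].
  pose proof (gs_bound (Rabs q) n hQ). destruct (Req_dec (gs (Rabs q) n) (Rabs q / (1 - Rabs q))) as [e|e].
  - rewrite e. lra.
  - left. apply exp_increasing. lra.
Qed.

End Ratio.

Lemma sum_n_fst : forall (u : nat -> C) n, sum_n (fun k => fst (u k)) n = fst (sum_n u n).
Proof.
  intros u n. induction n.
  - rewrite !sum_O. reflexivity.
  - rewrite !sum_Sn, IHn. reflexivity.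
Qed.
Lemma sum_n_snd : forall (u : nat -> C) n, sum_n (fun k => snd (u k)) n = snd (sum_n u n).
Proof.
  intros u n. induction n.
  - rewrite !sum_O. reflexivity.
  - rewrite !sum_Sn, IHn. reflexivity.
Qed.

Lemma is_series_fst : forall (u : nat -> C) (l : C),
  @is_series R_AbsRing C_R_NormedModule u l -> is_series (fun n => fst (u n)) (fst l).
Proof.
  intros u l H. unfold is_series in *.
  eapply filterlim_ext. intro n. symmetry. apply sum_n_fst.
  eapply filterlim_comp. exact H. destruct l as [l1 l2]. apply (@continuous_fst R_UniformSpace R_UniformSpace).
Qed.
Lemma is_series_snd : forall (u : nat -> C) (l : C),
  @is_series R_AbsRing C_R_NormedModule u l -> is_series (fun n => snd (u n)) (snd l).
Proof.
  intros u l H. unfold is_series in *.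
  eapply filterlim_ext. intro n. symmetry. apply sum_n_snd.
  eapply filterlim_comp. exact H. destruct l as [l1 l2]. apply (@continuous_snd R_UniformSpace R_UniformSpace).
Qed.

Lemma conv_fst : forall u, Cseries_conv u -> ex_series (fun n => fst (u n)).
Proof. intros u [l H]. exists (fst l). apply is_series_fst; auto. Qed.
Lemma conv_snd : forall u, Cseries_conv u -> ex_series (fun n => snd (u n)).
Proof. intros u [l H]. exists (snd l). apply is_series_snd; auto. Qed.

Lemma Cmod_le_sum : forall z : C, Cmod z <= Rabs (fst z) + Rabs (snd z).
Proof.
  intro z. unfold Cmod. pose proof (Rabs_pos (fst z)). pose proof (Rabs_pos (snd z)).
  rewrite <- (sqrt_pow2 (Rabs (fst z) + Rabs (snd z))) by lra.
  apply sqrt_le_1_alt. rewrite <- (pow2_abs (fst z)), <- (pow2_abs (snd z)).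
  simpl. nra.
Qed.

Lemma conv_terms_0 : forall u, Cseries_conv u -> is_lim_seq (fun n => Cmod (u n)) 0.
Proof.
  intros u H.
  pose proof (ex_series_lim_0 _ (conv_fst u H)) as H1.
  pose proof (ex_series_lim_0 _ (conv_snd u H)) as H2.
  apply is_lim_seq_abs in H1. apply is_lim_seq_abs in H2.
  pose proof (is_lim_seq_plus' _ _ _ _ H1 H2) as H3. simpl in H3.
  replace (Rabs 0 + Rabs 0) with 0 in H3 by (rewrite Rabs_R0; ring).
  apply (is_lim_seq_le_le_loc (fun _ => 0) _ (fun n => Rabs (fst (u n)) + Rabs (snd (u n))) 0 ); [|apply is_lim_seq_const|exact H3].
  exists 0%nat. intros n _. split; [apply Cmod_ge_0|apply Cmod_le_sum].
Qed.

Section Gen.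
Variables (s t : R).
Hypothesis hs : s <> 0.
Hypothesis ht : t <> 0.
Hypothesis hd : s ^ 2 + 4 * t > 0.
Variables (r r' : R).
Hypothesis Hr : (r = phi s t /\ r' = phi' s t) \/ (r = phi' s t /\ r' = phi s t).

Lemma rr_binet : forall n, (r - r') * fibst s t n = r ^ n - r' ^ n.
Proof.
  intro n. destruct Hr as [[-> ->]|[-> ->]].
  - rewrite phi_diff by auto. apply binet; auto.
  - replace (phi' s t - phi s t) with (- sqrt (s ^ 2 + 4 * t)) by (rewrite <- phi_diff; ring).
    replace (- sqrt (s ^ 2 + 4 * t) * fibst s t n) with (- (sqrt (s ^ 2 + 4 * t) * fibst s t n)) by ring.
    rewrite binet by auto. ring.
Qed.

Lemma r_nz : r <> 0.
Proof. destruct Hr as [[-> ->]|[-> ->]]; [apply phi_nz|apply phi'_nz]; auto. Qed.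
Lemma r'_nz : r' <> 0.
Proof. destruct Hr as [[-> ->]|[-> ->]]; [apply phi'_nz|apply phi_nz]; auto. Qed.
Lemma rr_abs : Rabs r <> Rabs r'.
Proof. pose proof (abs_phi_neq s t hs hd). destruct Hr as [[-> ->]|[-> ->]]; auto. Qed.

Lemma q_abs_ne1 : Rabs (r' / r) <> 1.
Proof.
  pose proof r_nz; pose proof rr_abs. rewrite Rabs_div by auto. intro h.
  apply H0. assert (Rabs r <> 0) by (apply Rabs_no_R0; auto).
  apply (Rmult_eq_compat_r (Rabs r)) in h. field_simplify in h; auto.
Qed.

Lemma gam_nz : forall n, gam s t r n <> 0.
Proof.
  intro n. unfold gam. pose proof (fibtorial_nz s t hs hd n). pose proof r_nz.
  unfold Rdiv. apply Rmult_integral_contrapositive; split.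
  - apply pow_nonzero; auto.
  - apply Rinv_neq_0_compat; auto.
Qed.

Lemma gam_grec : forall n, gam s t r (S n) * (1 - (r' / r) ^ S n) = gam s t r n * (1 - r' / r).
Proof.
  intro n. pose proof r_nz.
  assert (E : (r' / r) ^ S n = r' ^ S n / r ^ S n).
  { unfold Rdiv. rewrite Rpow_mult_distr, pow_inv. reflexivity. }
  rewrite E. pose proof (rr_binet (S n)). pose proof (gam_rec s t r n hs ht hd).
  assert (r ^ S n <> 0) by (apply pow_nonzero; auto).
  replace (1 - r' ^ S n / r ^ S n) with ((r ^ S n - r' ^ S n) / r ^ S n) by (field; auto).
  rewrite <- H0.
  replace (gam s t r (S n) * ((r - r') * fibst s t (S n) / r ^ S n)) with
    ((gam s t r (S n) * fibst s t (S n)) * (r - r') / r ^ S n) by (field; auto).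
  rewrite H1. simpl. field. split; auto. apply pow_nonzero; auto.
Qed.

Lemma conv_abs : forall z : C,
  Cseries_conv (fun n => Cmult (RtoC (gam s t r n)) (Cpow z n)) ->
  ex_series (fun n => Rabs (gam s t r n) * Cmod z ^ n).
Proof.
  intros z Hc.
  set (q := r' / r).
  pose proof (gam_0 s t r) as g0.
  pose proof gam_nz as gnz. pose proof gam_grec as grec. pose proof q_abs_ne1 as q1.
  assert (hrho : 0 <= Cmod z) by apply Cmod_ge_0.
  destruct (Rlt_dec 1 (Rabs q)) as [hq|hq].
  - apply (ex_series_abs (gam s t r) q); auto.
  - destruct (Rlt_dec (Cmod z * Rabs (1 - q)) 1) as [hz|hz].
    + apply (ex_series_abs (gam s t r) q); auto.
    + exfalso. assert (hq' : Rabs q < 1) by (fold q in q1; lra).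
      pose proof (lower_bound (gam s t r) q g0 gnz grec q1 hq' (Cmod z) ltac:(lra)) as LB.
      pose proof (conv_terms_0 _ Hc) as T.
      assert (forall n, exp (- (Rabs q / (1 - Rabs q))) <=
                Cmod (Cmult (RtoC (gam s t r n)) (Cpow z n))).
      { intro n. rewrite Cmod_mult, Cmod_R, Cmod_pow. apply LB. }
      pose proof (is_lim_seq_le _ _ _ _ H (is_lim_seq_const _) T). simpl in H0.
      pose proof (exp_pos (- (Rabs q / (1 - Rabs q)))). lra.
Qed.

End Gen.

Lemma is_series_delta : forall u : nat -> R, u 0%nat = 1 -> (forall n, u (S n) = 0) -> is_series u 1.
Proof.
  intros u h0 hS. apply is_series_Reals. unfold infinite_sum.
  assert (forall n, sum_f_R0 u n = 1).
  { induction n; simpl; auto. rewrite IHn, hS. ring. }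
  intros eps he. exists 0%nat. intros n _. rewrite H. unfold R_dist. rewrite Rminus_diag, Rabs_R0. auto.
Qed.

Lemma is_series_zero : forall u : nat -> R, (forall n, u n = 0) -> is_series u 0.
Proof.
  intros u h. apply is_series_Reals. unfold infinite_sum.
  assert (forall n, sum_f_R0 u n = 0).
  { induction n; simpl; rewrite h; auto. rewrite IHn. ring. }
  intros eps he. exists 0%nat. intros n _. rewrite H. unfold R_dist. rewrite Rminus_diag, Rabs_R0. auto.
Qed.

Lemma abs_fst_le : forall c : C, Rabs (fst c) <= Cmod c.
Proof. intro c. pose proof (Rmax_Cmod c). pose proof (Rmax_l (Rabs (fst c)) (Rabs (snd c))). lra. Qed.
Lemma abs_snd_le : forall c : C, Rabs (snd c) <= Cmod c.
Proof. intro c. pose proof (Rmax_Cmod c). pose proof (Rmax_r (Rabs (fst c)) (Rabs (snd c))). lra. Qed.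

Section Prod.
Variables (s t : R).
Hypothesis hs : s <> 0.
Hypothesis ht : t <> 0.
Hypothesis hd : s ^ 2 + 4 * t > 0.

Lemma abs_ex : forall (r r' : R) (z : C),
  (r = phi s t /\ r' = phi' s t) \/ (r = phi' s t /\ r' = phi s t) ->
  Cseries_conv (fun n => Cmult (RtoC (gam s t r n)) (Cpow z n)) ->
  ex_series (fun n => Rabs (fst (Cmult (RtoC (gam s t r n)) (Cpow z n)))) /\
  ex_series (fun n => Rabs (snd (Cmult (RtoC (gam s t r n)) (Cpow z n)))).
Proof.
  intros r r' z Hr Hc. pose proof (conv_abs s t hs ht hd r r' Hr z Hc) as E.
  split; apply (@ex_series_le R_AbsRing R_CompleteNormedModule _ (fun n => Rabs (gam s t r n) * Cmod z ^ n)); auto; intro n;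
    change norm with Rabs; cbv beta; rewrite Rabs_Rabsolu.
  - eapply Rle_trans; [apply abs_fst_le|]. rewrite Cmod_mult, Cmod_R, Cmod_pow. lra.
  - eapply Rle_trans; [apply abs_snd_le|]. rewrite Cmod_mult, Cmod_R, Cmod_pow. lra.
Qed.

Lemma term_prod : forall (z : C) k n, (k <= n)%nat ->
  Cmult (ExpTerm s t z k) (ExpTerm' s t (Copp z) (n - k)) =
  Cmult (RtoC (ee s t k * ee' s t (n - k))) (Cpow z n).
Proof.
  intros z k n hk. unfold ExpTerm, ExpTerm', ee, ee'.
  assert (En : Cpow z n = Cpow z (k + (n - k))) by (f_equal; lia). rewrite En.
  set (j := (n - k)%nat).
  replace (Copp z) with (Cmult (RtoC (-1)) z) by (apply injective_projections; simpl; ring).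
  rewrite Cpow_mult_l, Cpow_add_r, <- RtoC_pow.
  fold (gam s t (phi s t) k). fold (gam s t (phi' s t) j).
  rewrite !RtoC_mult. ring.
Qed.

Lemma Exp_prod : forall z : C, Exp_conv s t z -> Exp'_conv s t (Copp z) ->
  Cmult (Exp s t z) (Exp' s t (Copp z)) = RtoC 1.
Proof.
  intros z H1 H2.
  set (A := ExpTerm s t z). set (B := ExpTerm' s t (Copp z)).
  destruct (abs_ex (phi s t) (phi' s t) z ltac:(auto) H1) as [Aa1 Aa2].
  destruct (abs_ex (phi' s t) (phi s t) (Copp z) ltac:(auto) H2) as [Ab1 Ab2].
  set (a1 := fun n => fst (A n)). set (a2 := fun n => snd (A n)).
  set (b1 := fun n => fst (B n)). set (b2 := fun n => snd (B n)).
  assert (Sa1 := Series_correct a1 (ex_series_Rabs _ Aa1)).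
  assert (Sa2 := Series_correct a2 (ex_series_Rabs _ Aa2)).
  assert (Sb1 := Series_correct b1 (ex_series_Rabs _ Ab1)).
  assert (Sb2 := Series_correct b2 (ex_series_Rabs _ Ab2)).
  pose proof (is_series_mult a1 b1 _ _ Sa1 Sb1 Aa1 Ab1) as P11.
  pose proof (is_series_mult a2 b2 _ _ Sa2 Sb2 Aa2 Ab2) as P22.
  pose proof (is_series_mult a1 b2 _ _ Sa1 Sb2 Aa1 Ab2) as P12.
  pose proof (is_series_mult a2 b1 _ _ Sa2 Sb1 Aa2 Ab1) as P21.
  pose proof (is_series_minus _ _ _ _ P11 P22) as Re.
  pose proof (is_series_plus _ _ _ _ P12 P21) as Im.
  assert (TP : forall n k, (k <= n)%nat -> Cmult (A k) (B (n - k)%nat) =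
     Cmult (RtoC (ee s t k * ee' s t (n - k))) (Cpow z n)) by (intros; apply term_prod; auto).
  assert (KRe : forall n, sum_f_R0 (fun k => a1 k * b1 (n - k)%nat) n +
       - sum_f_R0 (fun k => a2 k * b2 (n - k)%nat) n = dd s t n * fst (Cpow z n)).
  { intro n. transitivity (sum_f_R0 (fun k => a1 k * b1 (n - k)%nat - a2 k * b2 (n - k)%nat) n).
    { rewrite minus_sum. ring. } unfold dd. rewrite Rmult_comm, scal_sum.
    apply sum_eq. intros k hk. unfold a1, a2, b1, b2.
    transitivity (fst (Cmult (A k) (B (n - k)%nat))); [simpl; ring|].
    rewrite TP by auto. simpl. ring. }
  assert (KIm : forall n, sum_f_R0 (fun k => a1 k * b2 (n - k)%nat) n +
       sum_f_R0 (fun k => a2 k * b1 (n - k)%nat) n = dd s t n * snd (Cpow z n)).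
  { intro n. rewrite <- plus_sum. unfold dd. rewrite Rmult_comm, scal_sum.
    apply sum_eq. intros k hk. unfold a1, a2, b1, b2.
    transitivity (snd (Cmult (A k) (B (n - k)%nat))); [simpl; ring|].
    rewrite TP by auto. simpl. ring. }
  assert (Re2 : is_series (fun n => dd s t n * fst (Cpow z n))
     (plus (Series a1 * Series b1) (opp (Series a2 * Series b2)))).
  { eapply is_series_ext; [|exact Re]. intro n. rewrite <- KRe. reflexivity. }
  assert (Im2 : is_series (fun n => dd s t n * snd (Cpow z n))
     (plus (Series a1 * Series b2) (Series a2 * Series b1))).
  { eapply is_series_ext; [|exact Im]. intro n. rewrite <- KIm. reflexivity. }
  assert (D1 : is_series (fun n => dd s t n * fst (Cpow z n)) 1).
  { apply is_series_delta.
    - rewrite dd_0 by auto. simpl. ring.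
    - intro n. rewrite dd_S by auto. ring. }
  assert (D2 : is_series (fun n => dd s t n * snd (Cpow z n)) 0).
  { apply is_series_zero. intro n. destruct n.
    - simpl. ring.
    - rewrite dd_S by auto. ring. }
  apply is_series_unique in Re2. apply is_series_unique in Im2.
  apply is_series_unique in D1. apply is_series_unique in D2.
  rewrite Re2 in D1. rewrite Im2 in D2.
  unfold Exp, Exp', Cseries. fold A B. fold a1 a2 b1 b2.
  unfold Cmult, RtoC. simpl. f_equal.
  - rewrite <- D1. reflexivity.
  - rewrite <- D2. reflexivity.
Qed.
End Prod.

Section Feq.
Variables (s t : R).
Hypothesis hs : s <> 0.
Hypothesis ht : t <> 0.
Hypothesis hd : s ^ 2 + 4 * t > 0.

Lemma term_shift : forall (a : C) (x : R) m,
  Cminus (ExpTerm s t (Cmult a (RtoC (phi s t * x))) (S m))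
         (ExpTerm s t (Cmult a (RtoC (phi' s t * x))) (S m)) =
  Cmult (Cmult (RtoC ((phi s t - phi' s t) * x)) a) (ExpTerm s t (Cmult a (RtoC (phi s t * x))) m).
Proof.
  intros a x m. unfold ExpTerm. fold (gam s t (phi s t) (S m)). fold (gam s t (phi s t) m).
  set (g := gam s t (phi s t)).
  assert (R1 : g (S m) * ((phi s t * x) ^ S m - (phi' s t * x) ^ S m) =
               ((phi s t - phi' s t) * x) * (g m * (phi s t * x) ^ m)).
  { rewrite !Rpow_mult_distr.
    replace (g (S m) * (phi s t ^ S m * x ^ S m - phi' s t ^ S m * x ^ S m)) with
      (g (S m) * (phi s t ^ S m - phi' s t ^ S m) * x ^ S m) by ring.
    rewrite <- binet by auto. rewrite phi_diff by auto.
    replace (g (S m) * (sqrt (s ^ 2 + 4 * t) * fibst s t (S m)) * x ^ S m) with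
      (sqrt (s ^ 2 + 4 * t) * (g (S m) * fibst s t (S m)) * x ^ S m) by ring.
    unfold g. rewrite gam_rec by auto. simpl. ring. }
  transitivity (Cmult (RtoC (g (S m) * ((phi s t * x) ^ S m - (phi' s t * x) ^ S m))) (Cpow a (S m))).
  { rewrite !Cpow_mult_l, <- !RtoC_pow. rewrite RtoC_mult, RtoC_minus. ring. }
  rewrite R1. rewrite !Cpow_mult_l, <- !RtoC_pow. rewrite !RtoC_mult. rewrite Cpow_S. ring.
Qed.

Lemma Exp_feq : forall (a : C) (x : R),
  Exp_conv s t (Cmult a (RtoC (phi s t * x))) ->
  Exp_conv s t (Cmult a (RtoC (phi' s t * x))) ->
  Cminus (Exp s t (Cmult a (RtoC (phi s t * x)))) (Exp s t (Cmult a (RtoC (phi' s t * x)))) =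
  Cmult (Cmult (RtoC ((phi s t - phi' s t) * x)) a) (Exp s t (Cmult a (RtoC (phi s t * x)))).
Proof.
  intros a x H1 H2.
  set (u := ExpTerm s t (Cmult a (RtoC (phi s t * x)))) in *.
  set (v := ExpTerm s t (Cmult a (RtoC (phi' s t * x)))) in *.
  set (K := Cmult (RtoC ((phi s t - phi' s t) * x)) a).
  assert (TS : forall m, Cminus (u (S m)) (v (S m)) = Cmult K (u m)) by (intro; apply term_shift).
  assert (T0 : Cminus (u 0%nat) (v 0%nat) = RtoC 0).
  { unfold u, v, ExpTerm. simpl. apply injective_projections; simpl; ring. }
  pose proof (conv_fst _ H1) as U1. pose proof (conv_snd _ H1) as U2.
  pose proof (conv_fst _ H2) as V1. pose proof (conv_snd _ H2) as V2.
  assert (Hf : Series (fun n => fst (u n)) - Series (fun n => fst (v n)) =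
               fst K * Series (fun n => fst (u n)) - snd K * Series (fun n => snd (u n))).
  { rewrite <- Series_minus by auto.
    rewrite Series_incr_1.
    2:{ apply (ex_series_minus _ _ U1 V1). }
    transitivity (0 + Series (fun k => fst K * fst (u k) - snd K * snd (u k))).
    { f_equal.
      - pose proof (f_equal fst T0). simpl in H. simpl. lra.
      - apply Series_ext. intro n. pose proof (f_equal fst (TS n)). simpl in H. simpl. lra. }
    rewrite Rplus_0_l, Series_minus.
    - rewrite !Series_scal_l. reflexivity.
    - apply (ex_series_scal_l (fst K) _ U1).
    - apply (ex_series_scal_l (snd K) _ U2). }
  assert (Hs : Series (fun n => snd (u n)) - Series (fun n => snd (v n)) =
               fst K * Series (fun n => snd (u n)) + snd K * Series (fun n => fst (u n))).
  { rewrite <- Series_minus by auto.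
    rewrite Series_incr_1.
    2:{ apply (ex_series_minus _ _ U2 V2). }
    transitivity (0 + Series (fun k => fst K * snd (u k) + snd K * fst (u k))).
    { f_equal.
      - pose proof (f_equal snd T0). simpl in H. simpl. lra.
      - apply Series_ext. intro n. pose proof (f_equal snd (TS n)). simpl in H. simpl. lra. }
    rewrite Rplus_0_l, Series_plus.
    - rewrite !Series_scal_l. reflexivity.
    - apply (ex_series_scal_l (fst K) _ U2).
    - apply (ex_series_scal_l (snd K) _ U1). }
  unfold Exp, Cseries. fold u v. fold K.
  apply injective_projections; cbn [Cminus Cplus Copp Cmult fst snd].
  - rewrite <- Hf. ring.
  - rewrite <- Hs. ring.
Qed.

End Feq.

Lemma is_derive_pair : forall (f1 f2 : R -> R) (x l1 l2 : R),
  is_derive f1 x l1 -> is_derive f2 x l2 ->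
  @is_derive R_AbsRing C_R_NormedModule (fun y => (f1 y, f2 y)) x (l1, l2).
Proof.
  intros f1 f2 x l1 l2 H1 H2. unfold is_derive in *.
  apply (filterdiff_comp'_2 f1 f2 (fun u v => (u, v) : C) x _ _ (fun u v => (u, v) : C) H1 H2).
  assert (forall y : prod_NormedModule R_AbsRing R_NormedModule R_NormedModule, (fst y, snd y) = y) by (intros [u v]; reflexivity).
  eapply (@filterdiff_ext_lin R_AbsRing (prod_NormedModule R_AbsRing R_NormedModule R_NormedModule) C_R_NormedModule _ _ _ (fun t => t)).
  - eapply (@filterdiff_ext R_AbsRing (prod_NormedModule R_AbsRing R_NormedModule R_NormedModule) C_R_NormedModule _ _ (fun t => t)).
    + intro y. symmetry. apply H.
    + exact (@filterdiff_id R_AbsRing C_R_NormedModule _).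
  - intro y. symmetry. apply H.
Qed.

Section Deriv.
Variables (s t : R).
Hypothesis hs : s <> 0.
Hypothesis ht : t <> 0.
Hypothesis hd : s ^ 2 + 4 * t > 0.
Variable a : C.

Definition Ar n := gam s t (phi s t) n * fst (Cpow a n).
Definition Ai n := gam s t (phi s t) n * snd (Cpow a n).

Lemma Exp_repr : forall x, Exp s t (Cmult a (RtoC x)) = (PSeries Ar x, PSeries Ai x).
Proof.
  intro x. unfold Exp, Cseries, PSeries. f_equal; apply Series_ext; intro n; unfold ExpTerm;
  fold (gam s t (phi s t) n); rewrite Cpow_mult_l, <- RtoC_pow; unfold Ar, Ai;
  cbn [Cmult fst snd RtoC]; ring.
Qed.

Lemma radius_pos : forall b : nat -> R,
  (forall n, Rabs (b n) <= Rabs (gam s t (phi s t) n) * Cmod a ^ n) ->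
  Rbar_lt 0 (CV_radius b).
Proof.
  intros b hb.
  set (q := phi' s t / phi s t). set (c := Rabs (1 - q)).
  assert (hc : 0 <= c) by apply Rabs_pos.
  assert (ha : 0 <= Cmod a) by apply Cmod_ge_0.
  set (r := / (2 * (Cmod a * c + 1))).
  assert (hr : 0 < r) by (apply Rinv_0_lt_compat; nra).
  assert (hrc : Cmod a * r * c < 1).
  { unfold r. replace (Cmod a * / (2 * (Cmod a * c + 1)) * c) with
      ((Cmod a * c) / (2 * (Cmod a * c + 1))) by (field; nra).
    apply (Rmult_lt_reg_r (2 * (Cmod a * c + 1))); [nra|].
    unfold Rdiv. rewrite Rmult_assoc, Rinv_l by nra. nra. }
  assert (Hr : (phi s t = phi s t /\ phi' s t = phi' s t) \/ (phi s t = phi' s t /\ phi' s t = phi s t)) by auto.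
  pose proof (ex_series_abs (gam s t (phi s t)) q (gam_nz s t hs ht hd _ _ Hr)
     (gam_grec s t hs ht hd _ _ Hr) (q_abs_ne1 s t hs ht hd _ _ Hr) (Cmod a * r)
     ltac:(nra) ltac:(right; fold c; lra)) as E.
  set (An := fun n => Rabs (gam s t (phi s t) n) * (Cmod a * r) ^ n) in E.
  assert (Hpos : forall n, 0 <= An n).
  { intro n. unfold An. apply Rmult_le_pos; [apply Rabs_pos|apply pow_le; nra]. }
  assert (X : CVN_r (fun n x => b n * x ^ n) {| pos := r; cond_pos := hr |}).
  { exists An. exists (Series An). split.
    - apply is_series_Reals. eapply is_series_ext; [|apply Series_correct; exact E].
      intro n. rewrite Rabs_right; [reflexivity|apply Rle_ge, Hpos].
    - intros n y hy. unfold Boule in hy. simpl in hy. rewrite Rminus_0_r in hy.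
      rewrite Rabs_mult, <- RPow_abs. unfold An. rewrite Rpow_mult_distr, <- Rmult_assoc.
      apply Rmult_le_compat; [apply Rabs_pos|apply pow_le, Rabs_pos|apply hb|].
      apply pow_incr. split; [apply Rabs_pos|lra]. }
  pose proof (CV_radius_Reals_1 b _ X) as L.
  eapply Rbar_lt_le_trans; [|exact L]. simpl. exact hr.
Qed.

Lemma Ar_bound : forall n, Rabs (Ar n) <= Rabs (gam s t (phi s t) n) * Cmod a ^ n.
Proof.
  intro n. unfold Ar. rewrite Rabs_mult. apply Rmult_le_compat_l; [apply Rabs_pos|].
  rewrite <- Cmod_pow. apply abs_fst_le.
Qed.
Lemma Ai_bound : forall n, Rabs (Ai n) <= Rabs (gam s t (phi s t) n) * Cmod a ^ n.
Proof.
  intro n. unfold Ai. rewrite Rabs_mult. apply Rmult_le_compat_l; [apply Rabs_pos|].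
  rewrite <- Cmod_pow. apply abs_snd_le.
Qed.

Lemma gam1 : gam s t (phi s t) 1 = 1.
Proof. unfold gam, binom2. simpl. field. Qed.

Lemma Exp_0 : Exp s t (Cmult a (RtoC 0)) = RtoC 1.
Proof.
  rewrite Exp_repr, !PSeries_0. unfold Ar, Ai. rewrite gam_0. simpl.
  apply injective_projections; simpl; ring.
Qed.

Lemma deriv0 : forall kappa : C,
  @is_derive R_AbsRing C_R_NormedModule (fun x => Cmult kappa (Exp s t (Cmult a (RtoC x)))) 0
    (Cmult a (Cmult kappa (Exp s t (Cmult a (RtoC (phi s t * 0)))))).
Proof.
  intro kappa. rewrite Rmult_0_r, Exp_0.
  pose proof (is_derive_PSeries Ar 0 ltac:(rewrite Rabs_R0; apply radius_pos, Ar_bound)) as D1.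
  pose proof (is_derive_PSeries Ai 0 ltac:(rewrite Rabs_R0; apply radius_pos, Ai_bound)) as D2.
  rewrite PSeries_0 in D1, D2. unfold PS_derive in D1, D2.
  unfold Ar at 2 in D1. unfold Ai at 2 in D2. rewrite gam1 in D1, D2.
  simpl in D1, D2.
  apply (is_derive_ext (fun y => (fst kappa * PSeries Ar y - snd kappa * PSeries Ai y,
                                  fst kappa * PSeries Ai y + snd kappa * PSeries Ar y))).
  { intro y. rewrite Exp_repr. reflexivity. }
  replace (Cmult a (Cmult kappa (RtoC 1))) with
    ((fst kappa * fst a - snd kappa * snd a, fst kappa * snd a + snd kappa * fst a) : C)
    by (apply injective_projections; simpl; ring).
  replace (1 * (1 * (fst a * 1 - snd a * 0))) with (fst a) in D1 by ring.
  replace (1 * (1 * (fst a * 0 + snd a * 1))) with (snd a) in D2 by ring.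
  apply is_derive_pair.
  - exact (is_derive_minus _ _ 0 _ _ (is_derive_scal _ 0 (fst kappa) _ D1) (is_derive_scal _ 0 (snd kappa) _ D2)).
  - exact (is_derive_plus _ _ 0 _ _ (is_derive_scal _ 0 (fst kappa) _ D2) (is_derive_scal _ 0 (snd kappa) _ D1)).
Qed.

End Deriv.

Lemma dnz : forall s t x, s <> 0 -> s ^ 2 + 4 * t > 0 -> x <> 0 ->
  RtoC ((phi s t - phi' s t) * x) <> RtoC 0.
Proof.
  intros s t x hs hd hx h. apply RtoC_inj in h.
  rewrite phi_diff in h by auto. pose proof (sq_pos s t hd).
  apply Rmult_integral in h. destruct h; lra.
Qed.

Lemma solves_kappa : forall s t (a kappa : C) (f : R -> C),
  s <> 0 -> t <> 0 -> s ^ 2 + 4 * t > 0 ->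
  (forall x, f x = Cmult kappa (Exp s t (Cmult a (RtoC x)))) ->
  forall x, involved_conv s t a x -> solves_at s t a f x.
Proof.
  intros s t a kappa f hs ht hd hf x hx. unfold solves_at, Dst_is.
  destruct (Req_EM_T x 0) as [e|e].
  - subst x. rewrite hf. eapply is_derive_ext; [intro y; symmetry; apply hf|].
    apply deriv0; auto.
  - rewrite !hf. destruct hx as [_ [H1 H2]].
    pose proof (Exp_feq s t hs ht hd a x H1 H2) as FE.
    set (E1 := Exp s t (Cmult a (RtoC (phi s t * x)))) in *.
    set (E2 := Exp s t (Cmult a (RtoC (phi' s t * x)))) in *.
    pose proof (dnz s t x hs hd e) as Hn.
    set (K := RtoC ((phi s t - phi' s t) * x)) in *.
    assert (E2 = Cminus E1 (Cmult (Cmult K a) E1)) by (rewrite <- FE; ring).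
    rewrite H. field. exact Hn.
Qed.

Theorem mainTheorem12 (s t : R) (a xi : C)
  (hs : s <> 0) (ht : t <> 0) (hd : s ^ 2 + 4 * t > 0) :
  (* (1) *)
  ((forall x : R, involved_conv s t a x ->
      solves_at s t a (fun x => Cmult xi (Exp s t (Cmult a (RtoC x)))) x)
   /\ Cmult xi (Exp s t (Cmult a (RtoC 0))) = xi)
  /\
  (* (2) *)
  (forall eta : R,
     Exp_conv s t (Cmult a (RtoC eta)) ->
     Exp'_conv s t (Copp (Cmult a (RtoC eta))) ->
     let f := fun x : R => Cmult xi (Cmult (Exp s t (Cmult a (RtoC x)))
                                     (Exp' s t (Copp (Cmult a (RtoC eta))))) in
     (forall x : R, involved_conv s t a x -> solves_at s t a f x)
     /\ f eta = xi)
  /\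
  (* (3) *)
  (forall eta : R, eta > 0 ->
     Exp_conv s t (Cmult a (RtoC eta)) ->
     Exp'_conv s t (Copp (Cmult a (RtoC eta))) ->
     let f := fun x : R => Cmult (Exp s t (Cmult a (RtoC x)))
                                 (Exp' s t (Copp (Cmult a (RtoC eta)))) in
     forall p : R -> C,
       (forall y : R, y <> 0 -> p (phi' s t / phi s t * y) = p y) ->
       let g := fun x : R => Cmult (p x) (f x) in
       (forall x : R, x <> 0 -> involved_conv s t a x -> solves_at s t a g x)
       /\ g eta = p eta).
Proof.
  split; [split|split].
  - intros x hx. apply (solves_kappa s t a xi); auto.
  - rewrite Exp_0 by auto. ring.
  - intros eta H1 H2 f. split.
    + intros x hx. apply (solves_kappa s t a (Cmult xi (Exp' s t (Copp (Cmult a (RtoC eta)))))); auto.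
      intro y. unfold f. ring.
    + unfold f. rewrite Exp_prod by auto. ring.
  - intros eta heta H1 H2 f p hp g. split.
    + intros x hx0 hx. unfold solves_at, Dst_is.
      destruct (Req_EM_T x 0) as [e|e]; [contradiction|].
      unfold g, f. destruct hx as [_ [H3 H4]].
      pose proof (Exp_feq s t hs ht hd a x H3 H4) as FE.
      assert (hpp : p (phi' s t * x) = p (phi s t * x)).
      { rewrite <- (hp (phi s t * x)).
        - f_equal. field. apply phi_nz; auto.
        - apply Rmult_integral_contrapositive; split; auto. apply phi_nz; auto. }
      rewrite hpp.
      set (E1 := Exp s t (Cmult a (RtoC (phi s t * x)))) in *.
      set (E2 := Exp s t (Cmult a (RtoC (phi' s t * x)))) in *.
      pose proof (dnz s t x hs hd e) as Hn.
      set (K := RtoC ((phi s t - phi' s t) * x)) in *.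
      assert (E2 = Cminus E1 (Cmult (Cmult K a) E1)) by (rewrite <- FE; ring).
      rewrite H. field. exact Hn.
    + unfold g, f. rewrite Exp_prod by auto. ring.
Qed.
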